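(* The Cantor–Bendixson rank of the poset $\mathcal{Q}$ is $\omega$, the first infinite ordinal.
   Context: $\mathcal{Q}$ is the set $\mathbb{N}\times(\mathbb{N}\cup\{0\})$ (with $\mathbb{N}=\{1,2,\dots\}$) with the relation $(t',r')<(t,r)$ iff $t'\mid t$ and $t'r'<tr$. For a set $\mathcal{P}$ with a transitive relation $<$, an element $p$ is minimal if no $q\in\mathcal{P}$ has $q<p$. Let $\mathcal{P}_0$ be the set of minimal elements of $\mathcal{P}$ and $\bar{\mathcal{P}}_0=\mathcal{P}\setminus\mathcal{P}_0$; for an ordinal $\alpha$, $\mathcal{P}_{\alpha+1}$ is the union of $\mathcal{P}_\alpha$ and the set of minimal elements of $\bar{\mathcal{P}}_\alpha$ (with the induced relation), and $\bar{\mathcal{P}}_{\alpha+1}=\mathcal{P}\setminus\mathcal{P}_{\alpha+1}$; for a limit ordinal $\beta$, $\mathcal{P}_\beta=\bigcup_{\alpha<\beta}\mathcal{P}_\alpha$ and $\bar{\mathcal{P}}_\beta=\bigcap_{\alpha<\beta}\bar{\mathcal{P}}_\alpha$. The Cantor–Bendixson rank $r_{CB}(\mathcal{P})$ is the minimal ordinal $\alpha$ with $\bar{\mathcal{P}}_\alpha=\bar{\mathcal{P}}_{\alpha+1}$. *)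

(* Defs.v *)
From mathcomp Require Import all_boot.
Set Implicit Arguments. Unset Strict Implicit. Unset Printing Implicit Defensive.

Section CB.
Variables (T : Type) (P : T -> Prop) (lt : T -> T -> Prop).

Definition minimal_in (S : T -> Prop) (p : T) : Prop :=
  S p /\ ~ (exists q, S q /\ lt q p).

Fixpoint CB_stage (n : nat) : T -> Prop :=
  match n with
  | 0 => minimal_in P
  | k.+1 => fun x => CB_stage k x \/
                    minimal_in (fun y => P y /\ ~ CB_stage k y) x
  end.

Definition CB_rest (n : nat) : T -> Prop := fun x => P x /\ ~ CB_stage n x.

Definition CB_stage_omega : T -> Prop := fun x => exists n, CB_stage n x.
Definition CB_rest_omega : T -> Prop := fun x => forall n, CB_rest n x.

Definition CB_stage_omega1 : T -> Prop :=
  fun x => CB_stage_omega x \/ minimal_in CB_rest_omega x.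
Definition CB_rest_omega1 : T -> Prop := fun x => P x /\ ~ CB_stage_omega1 x.

Definition same_set (A B : T -> Prop) : Prop := forall x, A x <-> B x.

(* r_CB(P) = omega : no finite alpha satisfies \bar P_alpha = \bar P_{alpha+1},
   and alpha = omega does. *)
Definition CB_rank_is_omega : Prop :=
  (forall n : nat, ~ same_set (CB_rest n) (CB_rest n.+1)) /\
  same_set CB_rest_omega CB_rest_omega1.
End CB.

(* The poset Q = N x (N u {0}) with N = {1,2,...} *)
Definition Q_carrier (p : nat * nat) : Prop := 0 < p.1.

Definition Q_lt (p q : nat * nat) : Prop :=
  (p.1 %| q.1) /\ p.1 * p.2 < q.1 * q.2.

(* Main.v *)
Require Import Defs.
From mathcomp Require Import all_boot.
From mathcomp Require Import zify.

Lemma stageE n (x : nat * nat) :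
  CB_stage Q_carrier Q_lt n x <-> Q_carrier x /\ x.1 * x.2 <= n.
Proof.
elim: n x => [|n IH] [t r] /=.
  split.
    move=> [Px Hn]; split => //; rewrite leqn0; apply/negPn/negP => H.
    apply: Hn; exists (t, 0); split; first exact: Px.
    by split; rewrite /= ?dvdnn // muln0 lt0n.
  move=> [Px H0]; split => // -[q [_ [_ Hq]]].
  by move: H0 Hq; rewrite /= leqn0 => /eqP ->.
split.
  move=> [/IH [Px Hle]|[[Px Hns] Hmin]]; split => //; first by apply: leqW.
  have Hgt : n < t * r.
    by rewrite ltnNge; apply/negP => Hle; apply: Hns; apply/IH.
  rewrite leqNgt; apply/negP => Hbig; apply: Hmin.
  exists (1, n.+1); split.
    split; first by [].
    by move/IH => [_ /=]; rewrite mul1n ltnn.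
  by split; rewrite /= ?dvd1n // mul1n.
move=> [Px Hle].
case: (leqP (t * r) n) => Hn; first by left; apply/IH.
right; split.
  split => //; move/IH => [_ /=]; rewrite leqNgt Hn //.
move=> [q [[Pq Hq] [_ Hlt]]]; apply: Hq; apply/IH; split => //.
by rewrite -ltnS; apply: leq_trans Hlt Hle.
Qed.

Theorem theorem6p5 : CB_rank_is_omega Q_carrier Q_lt.
Proof.
split.
  move=> n H.
  have [Hr _] := H (1, n.+1).
  have := Hr; case.
    split; first by [].
    by move/stageE => [_ /=]; rewrite mul1n ltnn.
  move=> _ Hs; apply: Hs; apply/stageE; split => //=; by rewrite mul1n.
have Hempty : forall x, ~ CB_rest_omega Q_carrier Q_lt x.
  move=> x H; have [Px Hn] := H (x.1 * x.2).
  by apply: Hn; apply/stageE.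
move=> x; split; first by move=> /Hempty.
move=> [Px Hn]; exfalso; apply: Hn; left; exists (x.1 * x.2); by apply/stageE.
Qed.
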